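(* Suppose that for every $s\in G$ and every $x_{P(s)}\in\mathcal{X}_{P(s)}$ there is a (possibly infinite) set $\Gamma(s,x_{P(s)})$ of real-valued functions on $\mathcal{X}_s$ such that the local credal set $\mathcal{M}_{s\mid x_{P(s)}}$ is exactly the set of real-valued functions $p$ on $\mathcal{X}_s$ satisfying $$\sum_{z_s\in\mathcal{X}_s}p(z_s)=1\quad\text{and}\quad \sum_{z_s\in\mathcal{X}_s}p(z_s)\gamma(z_s)\geq 0\ \text{ for all }\gamma\in\Gamma(s,x_{P(s)}).$$ Then $\mathcal{F}^{\mathrm{irr}}_G(X_G)$ consists exactly of those probability mass functions $P(X_G)$ on $\mathcal{X}_G$ such that for all $s\in G$, all $x_{N(s)}\in\mathcal{X}_{N(s)}$ and all $\gamma\in\Gamma(s,x_{P(s)})$ (where $x_{P(s)}$ is the restriction of $x_{N(s)}$ to $P(s)$): $$\sum_{z_s\in\mathcal{X}_s}\ \sum_{z_{D(s)}\in\mathcal{X}_{D(s)}}P(z_s,z_{D(s)},x_{N(s)})\,\gamma(z_s)\geq 0.$$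
   Context: Setting: $G$ is a finite set of nodes forming a directed acyclic graph (DAG). Each node $s\in G$ carries a variable $X_s$ taking values in a finite nonempty set $\mathcal{X}_s$; for $S\subseteq G$, $X_S=(X_s)_{s\in S}$ takes values $x_S$ in $\mathcal{X}_S=\times_{s\in S}\mathcal{X}_s$ ($\mathcal{X}_\emptyset$ is a singleton). Graph notions: $P(s)$ is the set of parents of $s$; $s\sqsubseteq v$ means there is a directed path (possibly of length 0) from $s$ to $v$, and $s\sqsubset v$ means $s\sqsubseteq v$ and $s\neq v$; $D(s)=\{v\in G: s\sqsubset v\}$ (descendants); $N(s)=G\setminus(\{s\}\cup D(s))$ (non-descendants); $N'(s)=N(s)\setminus P(s)$ (non-parent non-descendants). Local models: for every $s\in G$ and $x_{P(s)}\in\mathcal{X}_{P(s)}$, $\mathcal{M}_{s\mid x_{P(s)}}$ is a nonempty closed convex set of probability mass functions on $\mathcal{X}_s$. A full conditional probability measure on a finite set $\Omega$ is a map $P:\mathcal{P}(\Omega)\times(\mathcal{P}(\Omega)\setminus\{\emptyset\})\to\mathbb{R}$, $(A,B)\mapsto P(A\mid B)$, such that for all $A,C\subseteq\Omega$ and nonempty $B\subseteq \Omega$: (F1) $P(\cdot\mid B)$ is a probability measure on $\mathcal{P}(\Omega)$ with $P(B\mid B)=1$; (F2) $P(A\cap C\mid B)=P(A\mid C\cap B)P(C\mid B)$ whenever $C\cap B\neq\emptyset$. For $S\subseteq G$ and $x_S\in\mathcal{X}_S$, the event $x_S$ denotes $\{z_G\in\mathcal{X}_G: z_S=x_S\}$;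 $P(A)=P(A\mid\mathcal{X}_G)$. The irrelevant natural extension $\mathcal{F}^{\mathrm{irr}}_G$ is the set of all full conditional probability measures $P$ on $\mathcal{X}_G$ such that for all $s\in G$ and all $x_{N(s)}\in\mathcal{X}_{N(s)}$, the mass function $P(X_s\mid x_{N(s)})$ (i.e. $z_s\mapsto P(z_s\mid x_{N(s)})$) belongs to $\mathcal{M}_{s\mid x_{P(s)}}$, where $x_{P(s)}$ is the restriction of $x_{N(s)}$ to $P(s)$. $\mathcal{F}^{\mathrm{irr}}_G(X_G)$ denotes the set of global mass functions $x_G\mapsto P(x_G)$ for $P\in\mathcal{F}^{\mathrm{irr}}_G$. *)

(* Defs.v *)
From HB Require Import structures.
From mathcomp Require Import all_boot all_order all_algebra.
Set Implicit Arguments. Unset Strict Implicit. Unset Printing Implicit Defensive.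
Import Order.TTheory GRing.Theory Num.Theory.
Local Open Scope ring_scope.

Definition asg (G : finType) (X : G -> finType) : finType :=
  {dffun forall s : G, X s}.

(* The event x_S = { z_G : z_S = x_S }, given via any full assignment x
   extending the partial assignment x_S. *)
Definition ev (G : finType) (X : G -> finType) (S : {set G}) (x : asg X)
  : {set asg X} := [set z : asg X | [forall s in S, z s == x s]].

Definition evn (G : finType) (X : G -> finType) (s : G) (a : X s)
  : {set asg X} := [set z : asg X | z s == a].

Definition edge (G : finType) (par : G -> {set G}) : rel G :=
  fun u v => u \in par v.

Definition dag (G : finType) (par : G -> {set G}) : Prop :=
  forall u v : G, u \in par v -> ~~ connect (edge par) v u.

Definition desc (G : finType) (par : G -> {set G}) (s : G) : {set G} :=
  [set v | (v != s) && connect (edge par) s v].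

Definition nondesc (G : finType) (par : G -> {set G}) (s : G) : {set G} :=
  ~: (s |: desc par s).

(* Full conditional probability measure on a finite set T. Values at B = set0
   are irrelevant (not constrained). *)
Definition is_fcp (R : realFieldType) (T : finType)
  (P : {set T} -> {set T} -> R) : Prop :=
  (forall B : {set T}, B != set0 ->
     [/\ forall A : {set T}, 0 <= P A B,
         P setT B = 1,
         forall A C : {set T}, [disjoint A & C] -> P (A :|: C) B = P A B + P C B
       & P B B = 1]) /\
  (forall A B C : {set T}, B != set0 -> C :&: B != set0 ->
     P (A :&: C) B = P A (C :&: B) * P C B).

Definition locmass (R : realFieldType) (G : finType) (X : G -> finType)
  (par : G -> {set G}) (P : {set asg X} -> {set asg X} -> R) (s : G)
  (x : asg X) : {ffun X s -> R} :=
  [ffun a => P (evn a) (ev (nondesc par s) x)].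

(* Irrelevant natural extension: M s x is the local model M_{s | x_{P(s)}}. *)
Definition Firr (R : realFieldType) (G : finType) (X : G -> finType)
  (par : G -> {set G}) (M : forall s : G, asg X -> {ffun X s -> R} -> Prop)
  (P : {set asg X} -> {set asg X} -> R) : Prop :=
  is_fcp P /\ forall (s : G) (x : asg X), M s x (locmass par P s x).

(* Main.v *)
Require Import Defs.
From HB Require Import structures.
From mathcomp Require Import all_boot all_order all_algebra.
Import Order.TTheory GRing.Theory Num.Theory.
Local Open Scope ring_scope.
Set Warnings "-notation-overridden -ambiguous-paths".
From Stdlib Require Import ClassicalEpsilon.
Section Lex.
Variable R : realFieldType.
Variable T : finType.
Variable mu : nat -> T -> R.
Variable N : nat.
Hypothesis mu_ge0 : forall n w, 0 <= mu n w.
Hypothesis charge : forall w : T, exists2 n, (n < N)%N & 0 < mu n w.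

Definition mass n (B : {set T}) := \sum_(w in B) mu n w.
Definition fi (B : {set T}) := find (fun n => 0 < mass n B) (iota 0 N).
Definition Plex (A B : {set T}) := mass (fi B) (A :&: B) / mass (fi B) B.

Lemma mass_ge0 n B : 0 <= mass n B.
Proof. by apply: sumr_ge0 => w _; apply: mu_ge0. Qed.

Lemma mass_sub n (A B : {set T}) : A \subset B -> mass n A <= mass n B.
Proof.
move=> sAB; rewrite /mass [X in _ <= X](big_setID A) /=.
rewrite (setIidPr sAB) lerDl; exact: mass_ge0.
Qed.

Lemma massU n (A C : {set T}) : [disjoint A & C] -> mass n (A :|: C) = mass n A + mass n C.
Proof.
move=> dAC; rewrite /mass -bigU //; apply: eq_bigl => w; by rewrite !inE.
Qed.

Lemma fiP B : B != set0 ->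
  [/\ (fi B < N)%N, 0 < mass (fi B) B & forall j, (j < fi B)%N -> mass j B <= 0].
Proof.
case/set0Pn=> w wB.
have hh : has (fun n => 0 < mass n B) (iota 0 N).
  case: (charge w) => n nN mun; apply/hasP; exists n; first by rewrite mem_iota.
  apply: (lt_le_trans mun); rewrite /mass (bigD1 w) //= lerDl.
  by apply: sumr_ge0 => *; apply: mu_ge0.
have := hh; rewrite has_find size_iota => fN.
split=> //.
- by have := nth_find 0%N hh; rewrite nth_iota.
- move=> j jk; have := before_find 0%N jk; rewrite nth_iota ?add0n.
    by move/negbT; rewrite -leNgt.
  exact: ltn_trans jk fN.
Qed.

Arguments fiP {B}.
Lemma fi_uniq B k : (k < N)%N -> 0 < mass k B ->
  (forall j, (j < k)%N -> mass j B <= 0) -> fi B = k.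
Proof.
move=> kN pk bk.
have Bn : B != set0.
  apply/negP=> /eqP B0; move: pk; by rewrite B0 /mass big_set0 ltxx.
have [fN pf bf] := fiP Bn.
case: (ltngtP (fi B) k) => // h.
- by have := bk _ h; rewrite leNgt pf.
- by have := bf _ h; rewrite leNgt pk.
Qed.

Lemma Plex_fcp : is_fcp Plex.
Proof.
split.
- move=> B Bn; have [fN pf bf] := fiP Bn.
  have mB : mass (fi B) B != 0 by rewrite gt_eqF.
  split.
  + move=> A; apply: divr_ge0; exact: mass_ge0.
  + by rewrite /Plex setTI divff.
  + move=> A C dAC; rewrite /Plex setIUl massU ?mulrDl //.
    apply: (disjointWl (subsetIl A B)); rewrite disjoint_sym.
    by apply: (disjointWl (subsetIl C B)); rewrite disjoint_sym.
  + by rewrite /Plex setIid divff.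
- move=> A B C Bn CBn; have [fN pf bf] := fiP Bn.
  set k := fi B.
  have hle : forall j, (j < k)%N -> mass j (C :&: B) <= 0.
    move=> j jk; apply: le_trans (bf _ jk); apply: mass_sub; exact: subsetIr.
  have [pos|] := boolP (0 < mass k (C :&: B)).
    have e : fi (C :&: B) = k by apply: fi_uniq.
    by rewrite /Plex e -/k setIA mulrA divfK ?gt_eqF.
  rewrite lt_def negb_and negbK mass_ge0 orbF => /eqP z.
  have z2 : mass k (A :&: C :&: B) = 0.
    apply/eqP; rewrite eq_le mass_ge0 andbT -z; apply: mass_sub.
    by rewrite -setIA subsetIr.
  by rewrite /Plex -/k setIA z2 z !mul0r mulr0.
Qed.

End Lex.
Section Net.
Variable R : realFieldType.
Variable G : finType.
Variable par : G -> {set G}.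
Variable X : G -> finType.
Hypothesis hdag : dag par.

Lemma evP (S : {set G}) (y z : asg X) :
  reflect (forall u, u \in S -> z u = y u) (z \in ev S y).
Proof.
rewrite /ev inE; apply: (iffP forall_inP) => h u uS; first exact/eqP/h.
by apply/eqP/h.
Qed.

Lemma ndE s u : (u \in nondesc par s) = (u != s) && ~~ connect (edge par) s u.
Proof.
rewrite /nondesc /desc !inE negb_or; case: (u =P s) => //= _.
Qed.

Lemma par_nd s u : u \in par s -> u \in nondesc par s.
Proof.
move=> up; rewrite ndE (negbTE (hdag _ _ up)); apply/andP; split=> //; apply/eqP=> e; subst u.
by move: (hdag _ _ up); rewrite connect0.
Qed.

Lemma nd_par s t u : t \in nondesc par s -> u \in par t -> u \in nondesc par s.
Proof.
rewrite !ndE => /andP[ts nc] up; apply/andP; split.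
  apply/eqP=> e; subst u; move/negP: nc; apply.
  exact: connect1.
apply/negP=> c; move/negP: nc; apply; apply: (connect_trans c).
exact: connect1.
Qed.

Definition anc t := [set u | (u != t) && connect (edge par) u t].

Lemma source (S : {set G}) : S != set0 ->
  exists2 t0, t0 \in S & forall u, u \in par t0 -> u \notin S.
Proof.
case/set0Pn => t1 t1S.
case: (arg_minnP (fun t => #|anc t|) t1S) => t0 t0S min.
exists t0 => // u up; apply/negP => uS.
have := min u uS; rewrite leqNgt => /negP; apply.
apply: proper_card; apply/properP; split.
  apply/subsetP=> v; rewrite !inE => /andP[vu c]; apply/andP; split.
    apply/eqP=> e; subst v. by move: (hdag _ _ up); rewrite c.
  apply: (connect_trans c); exact: connect1.
exists u; last by rewrite inE eqxx.
have cu : connect (edge par) u t0 by apply: connect1.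
rewrite inE cu andbT.
apply/eqP=> e; subst u; by move: (hdag _ _ up); rewrite connect0.
Qed.

Definition upd (y : asg X) t (b : X t) : asg X := finfun (@dfwith G (fun u => X u) (fun u => y u) t b).

Arguments upd y {t} b.
Lemma upd_in (y : asg X) t (b : X t) : upd y b t = b.
Proof. by rewrite /upd ffunE dfwith_in. Qed.

Lemma upd_out (y : asg X) t (b : X t) u : t != u -> upd y b u = y u.
Proof. by move=> ne; rewrite /upd ffunE dfwith_out. Qed.

Lemma sumout (F : forall t, asg X -> {ffun X t -> R})
  (Fdep : forall t (v w : asg X), (forall u, u \in par t -> v u = w u) -> F t v = F t w)
  (Fsum : forall t v, \sum_a F t v a = 1) :
  forall (S : {set G}) (y : asg X),
    \sum_(w in ev (~: S) y) \prod_(t in S) F t w (w t) = 1.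
Proof.
move=> S; move: {2}#|S| (leqnn #|S|) => n; elim: n S => [|n IH] S hS y.
  move: hS; rewrite leqn0 cards_eq0 => /eqP ->.
  have -> : ev (~: set0) y = [set y].
    apply/setP=> z; rewrite in_set1; apply/idP/idP => [/evP h|/eqP ->]; last by apply/evP.
    apply/eqP; apply/(ffunP z y) => u; by rewrite h // !inE.

  by rewrite big_set1 big_set0.
have [->|Sn] := eqVneq S set0.
  by apply: IH; rewrite cards0.
case: (source _ Sn) => t0 t0S src.
transitivity (\sum_(w in ev (~: S) y) (F t0 y (w t0) *
                 \prod_(t in S :\ t0) F t w (w t))).
  apply: eq_bigr => w wE; rewrite (big_setD1 t0 t0S); congr (_ * _).
  congr (_ _ _); apply: Fdep => u up; move/evP: wE; apply.
  by rewrite inE src.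
rewrite (partition_big (fun w : asg X => w t0) (predT : pred (X t0))) //=.
rewrite -[RHS](Fsum t0 y); apply: eq_bigr => b _.
transitivity (\sum_(w in ev (~: (S :\ t0)) (upd y b)) (F t0 y b *
                 \prod_(t in S :\ t0) F t w (w t))).
  apply: eq_big => [w|w /andP[_ /eqP ->] //].
  apply/andP/evP => [[/evP wE /eqP wb] u|h].
    rewrite !inE negb_and negbK => /orP[/eqP e|uS].
      by subst u; rewrite upd_in.
    rewrite upd_out; first by apply: wE; rewrite inE.
    by apply/eqP=> e; subst u; move: uS; rewrite t0S.
  split.
    apply/evP=> u uS; have ne : t0 != u.
      by apply/eqP=> e; subst u; move: uS; rewrite inE t0S.
    rewrite -(upd_out y _ b _ ne); apply: h; move: uS; rewrite !inE => uS; by rewrite (negbTE uS) andbF.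
  by rewrite h ?upd_in // !inE eqxx.
rewrite -mulr_sumr IH ?mulr1 //.
by move: hS; rewrite (cardsD1 t0 S) t0S.
Qed.

Lemma lay_ev (F : forall t, asg X -> {ffun X t -> R})
  (Fdep : forall t (v w : asg X), (forall u, u \in par t -> v u = w u) -> F t v = F t w)
  (Fsum : forall t v, \sum_a F t v a = 1) s (x : asg X) (a : X s) :
  \sum_(w in evn a :&: ev (nondesc par s) x) \prod_t F t w (w t)
  = F s x a * \prod_(t in nondesc par s) F t x (x t).
Proof.
set Nd := nondesc par s; set D := desc par s.
have sD : s \notin D by rewrite !inE eqxx.
have cNd : forall t, (t \notin Nd) = (t \in s |: D).
  by move=> t; rewrite /Nd /nondesc inE negbK.
transitivity (\sum_(w in ev (~: D) (upd x a))
   (\prod_(t in Nd) F t x (x t) * (F s x a * \prod_(t in D) F t w (w t)))).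
  apply: eq_big => [w|w].
    apply/setIP/evP => [[ws /evP wN] u|h].
      rewrite inE => uD.
      case: (eqVneq s u) => [e|ne].
        subst u; by rewrite upd_in; move: ws; rewrite inE => /eqP.
      rewrite upd_out // wN // /Nd /nondesc in_setC in_setU1 negb_or uD andbT eq_sym ne //.
    split.
      by rewrite inE h ?upd_in // inE.
    apply/evP=> u uN; have ne : s != u.
      by apply/eqP=> e; subst u; move: uN; rewrite ndE eqxx.
    rewrite -(upd_out x _ a _ ne); apply: h; rewrite in_setC; apply/negP => uD; move: uN.
    by rewrite /Nd /nondesc in_setC in_setU1 uD orbT.
  move/setIP=> [ws /evP wN].
  rewrite (bigID (mem Nd)) /=; congr (_ * _).
    apply: eq_bigr => t tN; rewrite wN //; congr (_ _ _).
    by apply: Fdep => u up; apply: wN; apply: nd_par tN up.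
  rewrite (eq_bigl (mem (s |: D))); last by move=> t; rewrite /= cNd.
  rewrite big_setU1 //=; congr (_ * _).
  move: ws; rewrite inE => /eqP ->; congr (_ _ _).
  by apply: Fdep => u up; apply: wN; apply: par_nd.
rewrite -mulr_sumr -mulr_sumr sumout // mulr1 mulrC //.
Qed.

Lemma part_s s (B : {set asg X}) (h : asg X -> R) :
  \sum_(a : X s) \sum_(w in evn a :&: B) h w = \sum_(w in B) h w.
Proof.
rewrite [RHS](partition_big (fun w : asg X => w s) (predT : pred (X s))) //=.
apply: eq_bigr => a _; apply: eq_bigl => w.
by rewrite !inE andbC.
Qed.

Lemma evT (y : asg X) : ev setT y = [set y].
Proof.
apply/setP=> z; rewrite in_set1; apply/idP/idP => [/evP h|/eqP ->]; last by apply/evP.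
apply/eqP; apply/(ffunP z y) => u; by rewrite h // !inE.
Qed.

End Net.
Section Fwd.
Variable R : realFieldType.
Variable T : finType.
Variable P : {set T} -> {set T} -> R.
Hypothesis hP : is_fcp P.

Lemma P0 B : B != set0 -> P set0 B = 0.
Proof.
move=> Bn; case: (hP.1 B Bn) => _ _ hadd _.
have dd : [disjoint (set0 : {set T}) & (set0 : {set T})] by rewrite -setI_eq0 setI0.
have := hadd set0 set0 dd; rewrite setU0 => h.
have : P set0 B + P set0 B = P set0 B + 0 by rewrite addr0 -h.
by move/addrI.
Qed.

Lemma Padd B : B != set0 -> forall A, P A B = \sum_(w in A) P [set w] B.
Proof.
move=> Bn A; move: {2}#|A| (erefl #|A|) => n; elim: n A => [|n IH] A hA.
  move: hA => /eqP; rewrite cards_eq0 => /eqP ->; by rewrite big_set0 P0.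
have : A != set0 by apply/negP=> /eqP e; move: hA; rewrite e cards0.
case/set0Pn => a aA.
rewrite (big_setD1 a aA) -IH; last first.
  by move: hA; rewrite (cardsD1 a A) aA add1n => -[].
case: (hP.1 B Bn) => _ _ hadd _.
rewrite /= -hadd ?setD1K //.
by rewrite disjoint_sym; apply/pred0P=> w; rewrite /= !inE andbC; case: eqP.
Qed.

Lemma Pcond A B : B != set0 -> P (A :&: B) B = P A B.
Proof.
move=> Bn; rewrite hP.2 ?setIid //; case: (hP.1 B Bn) => _ _ _ ->.
by rewrite mulr1.
Qed.

End Fwd.
Lemma hXp (G : finType) (X : G -> finType) (hX : forall s : G, exists a : X s, True)
  u : exists a : X u, predT a.
Proof. by case: (hX u) => a _; exists a. Qed.
Arguments hXp {G X} hX u.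

Definition dflt (G : finType) (X : G -> finType)
  (hX : forall s : G, exists a : X s, True) (u : G) : X u := xchoose (hXp hX u).
Arguments dflt {G X} hX u.

Section Constr.
Variable R : realFieldType.
Variable G : finType.
Variable par : G -> {set G}.
Variable X : G -> finType.
Variable M : forall s : G, asg X -> {ffun X s -> R} -> Prop.
Variable Gam : forall s : G, asg X -> {ffun X s -> R} -> Prop.
Hypothesis hdag : dag par.
Hypothesis hX : forall s : G, exists a : X s, True.
Hypothesis hMpar : forall (s : G) (x y : asg X),
      (forall t, t \in par s -> x t = y t) -> M s x = M s y.
Hypothesis hMne : forall (s : G) (x : asg X), exists p, M s x p.
Hypothesis hMpmf : forall (s : G) (x : asg X) (p : {ffun X s -> R}),
      M s x p -> (forall a, 0 <= p a) /\ \sum_a p a = 1.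
Hypothesis hMG : forall (s : G) (x : asg X) (p : {ffun X s -> R}),
      M s x p <->
      (\sum_a p a = 1 /\
       forall g, Gam s x g -> 0 <= \sum_a p a * g a).
Variable q : {ffun asg X -> R}.
Hypothesis hq0 : forall x, 0 <= q x.
Hypothesis hq1 : \sum_x q x = 1.
Hypothesis hqG : forall (s : G) (x : asg X) (g : {ffun X s -> R}), Gam s x g ->
       0 <= \sum_(w in ev (nondesc par s) x) q w * g (w s).

Definition rep t (w : asg X) : asg X :=
  @finfun G (fun u => X u) (fun u => if u \in par t then w u else dflt hX u).

Lemma rep_agree t w u : u \in par t -> rep t w u = w u.
Proof. by move=> up; rewrite /rep ffunE up. Qed.

Lemma rep_eq t (v w : asg X) : (forall u, u \in par t -> v u = w u) -> rep t v = rep t w.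
Proof.
move=> h; apply/(ffunP (rep t v) (rep t w)) => u; rewrite /rep !ffunE.
by case: ifP => // up; rewrite h.
Qed.

Definition pp t w : {ffun X t -> R} :=
  proj1_sig (constructive_indefinite_description _ (hMne t (rep t w))).

Lemma ppM t w : M t w (pp t w).
Proof.
have h := proj2_sig (constructive_indefinite_description _ (hMne t (rep t w))).
rewrite -(hMpar t (rep t w) w (rep_agree t w)); exact: h.
Qed.

Definition uf t : {ffun X t -> R} := [ffun _ => (#|X t|%:R)^-1].
Definition f (T : {set G}) t (w : asg X) : {ffun X t -> R} :=
  if t \in T then uf t else pp t w.
Definition lay T (w : asg X) := \prod_t f T t w (w t).
Definition cc k w := \sum_(T : {set G} | #|T| == k) lay T w.
Definition mu n w := if n is k.+1 then cc k w else q w.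
Definition Nn := #|G|.+2.

Lemma uf_gt0 t a : 0 < uf t a.
Proof.
rewrite ffunE invr_gt0 ltr0n; apply/card_gt0P; by exists (dflt hX t).
Qed.

Lemma uf_sum t : \sum_a uf t a = 1.
Proof.
under eq_bigr do rewrite ffunE.
rewrite sumr_const -[(_^-1) *+ _]mulr_natr mulVf // pnatr_eq0 -lt0n.
apply/card_gt0P; by exists (dflt hX t).
Qed.

Lemma f_ge0 T t w a : 0 <= f T t w a.
Proof.
rewrite /f; case: ifP => _; first exact/ltW/uf_gt0.
exact: (hMpmf _ _ _ (ppM t w)).1.
Qed.

Lemma f_sum T t w : \sum_a f T t w a = 1.
Proof.
rewrite /f; case: ifP => _; first exact: uf_sum.
exact: (hMpmf _ _ _ (ppM t w)).2.
Qed.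

Lemma f_dep T t (v w : asg X) : (forall u, u \in par t -> v u = w u) -> f T t v = f T t w.
Proof. by move=> h; rewrite /f /pp (rep_eq t v w h). Qed.

Lemma lay_ge0 T w : 0 <= lay T w.
Proof. by apply: prodr_ge0 => t _; apply: f_ge0. Qed.

Lemma mu_ge0 n w : 0 <= mu n w.
Proof.
case: n => [|k] /=; first exact: hq0.
by apply: sumr_ge0 => T _; apply: lay_ge0.
Qed.

Lemma charge w : exists2 n, (n < Nn)%N & 0 < mu n w.
Proof.
exists #|G|.+1; first by rewrite /Nn.
rewrite /= /cc (bigD1 setT) ?cardsT //=.
have h : 0 < lay setT w.
  by apply: prodr_gt0 => t _; rewrite /f inE; apply: uf_gt0.
apply: (lt_le_trans h); rewrite lerDl.
by apply: sumr_ge0 => T _; apply: lay_ge0.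
Qed.

Definition PP := @Plex R (asg X) mu Nn.

Lemma PP_fcp : is_fcp PP.
Proof. apply: Plex_fcp; [exact: mu_ge0 | exact: charge]. Qed.

Local Notation ms := (mass R (asg X) mu).
Local Notation fiB := (fi R (asg X) mu Nn).

Lemma PP_T x : q x = PP (ev setT x) setT.
Proof.
have m1 : ms 0 setT = 1.
  by rewrite /mass /= -hq1; apply: eq_bigl => w; rewrite inE.
have e : fiB setT = 0%N.
  by apply: (fi_uniq R (asg X) mu Nn mu_ge0 charge) => //; rewrite m1 ltr01.
by rewrite /PP /Plex e evT setIT m1 divr1 /mass big_set1.
Qed.

Lemma massc j E : ms j.+1 E = \sum_(T : {set G} | #|T| == j) \sum_(w in E) lay T w.
Proof. by rewrite /mass /= /cc; exact: exchange_big. Qed.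

Definition K s x T := \prod_(t in nondesc par s) f T t x (x t).

Lemma K_ge0 s x T : 0 <= K s x T.
Proof. by apply: prodr_ge0 => t _; apply: f_ge0. Qed.

Lemma layE s x a T : \sum_(w in evn a :&: ev (nondesc par s) x) lay T w = f T s x a * K s x T.
Proof. exact: (lay_ev R G par X hdag (f T) (f_dep T) (f_sum T) s x a). Qed.

Lemma layB s x T : \sum_(w in ev (nondesc par s) x) lay T w = K s x T.
Proof.
rewrite -(part_s R G X s); under eq_bigr do rewrite layE.
by rewrite -mulr_suml f_sum mul1r.
Qed.

Lemma loc_main s x : M s x (locmass par PP s x).
Proof.
set B := ev (nondesc par s) x.
have Bn : B != set0 by apply/set0Pn; exists x; apply/evP.
have [fN pf bf] := fiP R (asg X) mu Nn mu_ge0 charge B Bn.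
have PPE : forall a, PP (evn a) B = ms (fiB B) (evn a :&: B) / ms (fiB B) B by [].
move: fN pf bf PPE; case e: (fiB B) => [|j] fN pf bf PPE.
- apply/hMG; split.
    under eq_bigr do rewrite ffunE PPE.
    by rewrite -mulr_suml /mass (part_s R G X s B (mu 0)) divff // gt_eqF.
  move=> g gG; under eq_bigr do rewrite ffunE PPE.
  have -> : \sum_a ms 0 (evn a :&: B) / ms 0 B * g a =
            (ms 0 B)^-1 * \sum_(w in B) q w * g (w s).
    rewrite -(part_s R G X s B (fun w => q w * g (w s))) mulr_sumr.
    apply: eq_bigr => a _; rewrite mulrAC mulrC /mass mulr_suml /=.
    congr (_ * _); apply: eq_bigr => w; rewrite !inE => /andP[/eqP -> _] //.
  apply: mulr_ge0; last exact: hqG.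
  by rewrite invr_ge0; apply: mass_ge0; exact: mu_ge0.
- have Kz : forall T : {set G}, #|T| == j -> s \in T -> K s x T = 0.
    move=> T /eqP cT sT.
    have cT' : #|T :\ s| = j.-1 by rewrite -cT (cardsD1 s T) sT.
    have KT' : K s x (T :\ s) = K s x T.
      apply: eq_bigr => t tN; rewrite /f in_setD1.
      by move: tN; rewrite ndE => /andP[-> _].
    move: e fN pf bf PPE cT cT'; case: j => [|j'] e fN pf bf PPE cT cT'.
      by move: cT; rewrite (cardsD1 s T) sT.
    have := bf j'.+1 (ltnSn _); rewrite massc.
    have : K s x (T :\ s) <= \sum_(T0 : {set G} | #|T0| == j') \sum_(w in B) lay T0 w.
      rewrite (bigD1 (T :\ s)) /=; last by rewrite cT'.
      rewrite layB lerDl; apply: sumr_ge0 => T0 _; apply: sumr_ge0 => w _.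
      exact: lay_ge0.
    rewrite KT' => h1 h2; apply/eqP; rewrite eq_le K_ge0 andbT.
    exact: le_trans h1 h2.
  have key : forall a, ms j.+1 (evn a :&: B) = pp s x a * ms j.+1 B.
    move=> a; rewrite !massc mulr_sumr; apply: eq_bigr => T cT.
    rewrite layE layB; case sT: (s \in T); first by rewrite Kz // !mulr0.
    by rewrite /f sT.
  have hpp : locmass par PP s x = pp s x.
    apply/ffunP => a; rewrite ffunE PPE key mulfK // gt_eqF //.
  rewrite hpp; exact: ppM.
Qed.

Lemma construct : exists P, Firr par M P /\ forall x, q x = P (ev setT x) setT.
Proof.
exists PP; split; last exact: PP_T.
split; [exact: PP_fcp | exact: loc_main].
Qed.

End Constr.

Theorem proposition1 (R : realFieldType) (G : finType) (par : G -> {set G})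
  (X : G -> finType)
  (M : forall s : G, asg X -> {ffun X s -> R} -> Prop)
  (Gam : forall s : G, asg X -> {ffun X s -> R} -> Prop)
  (hdag : dag par)
  (hX : forall s : G, exists a : X s, True)
  (hMpar : forall (s : G) (x y : asg X),
      (forall t, t \in par s -> x t = y t) -> M s x = M s y)
  (hGpar : forall (s : G) (x y : asg X),
      (forall t, t \in par s -> x t = y t) -> Gam s x = Gam s y)
  (hMne : forall (s : G) (x : asg X), exists p, M s x p)
  (hMpmf : forall (s : G) (x : asg X) (p : {ffun X s -> R}),
      M s x p -> (forall a, 0 <= p a) /\ \sum_a p a = 1)
  (hMG : forall (s : G) (x : asg X) (p : {ffun X s -> R}),
      M s x p <->
      (\sum_a p a = 1 /\
       forall g, Gam s x g -> 0 <= \sum_a p a * g a)) :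
  forall q : {ffun asg X -> R},
    (exists P : {set asg X} -> {set asg X} -> R,
        Firr par M P /\ forall x : asg X, q x = P (ev setT x) setT)
    <->
    ((forall x, 0 <= q x) /\ \sum_x q x = 1 /\
     forall (s : G) (x : asg X) (g : {ffun X s -> R}), Gam s x g ->
       0 <= \sum_(w in ev (nondesc par s) x) q w * g (w s)).
Proof.
move=> q; split; last first.
  case=> h0 [h1 hG].
  exact: (construct R G par X M Gam hdag hX hMpar hMne hMpmf hMG q h0 h1 hG).
case=> P [[hP hloc] hq].
have qE : forall w, q w = P [set w] setT by move=> w; rewrite hq evT.
have w0 : asg X := finfun (dflt hX).
have Tn : (setT : {set asg X}) != set0 by apply/set0Pn; exists w0.
have [Pge0 PT _ _] := hP.1 setT Tn.
split; first by move=> x; rewrite qE.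
split.
  rewrite -PT (Padd R (asg X) P hP setT Tn).
  by apply: eq_big => [w|w _]; rewrite ?inE ?qE.
move=> s x g gG.
set B := ev (nondesc par s) x.
have Bn : B != set0 by apply/set0Pn; exists x; apply/evP.
have [_ hg] := (hMG _ _ _).1 (hloc s x).
have -> : \sum_(w in B) q w * g (w s) =
          P B setT * \sum_a locmass par P s x a * g a.
  transitivity (P B setT * \sum_(w in B) P [set w] B * g (w s)).
    rewrite mulr_sumr; apply: eq_bigr => w wB.
    rewrite qE mulrA; congr (_ * _).
    have sw : [set w] :&: B = [set w] by apply/setIidPl; rewrite sub1set.
    rewrite -{1}sw hP.2 //; last by rewrite setIT.
    by rewrite setIT mulrC.
  congr (_ * _).
  rewrite -(part_s R G X s B (fun w => P [set w] B * g (w s))).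
  apply: eq_bigr => a _; rewrite ffunE.
  rewrite -(Pcond R (asg X) P hP (evn a) B Bn) (Padd R (asg X) P hP B Bn) mulr_suml.
  by apply: eq_bigr => w; rewrite !inE => /andP[/eqP -> _].
by apply: mulr_ge0; [exact: Pge0 | exact: hg].
Qed.
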